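(* Let $\tilde W$ be the affine Coxeter group of type $\tilde G_2$ (Coxeter generators $r_1,r_2,r_3$ with $(r_1r_2)^6=1$, $(r_2r_3)^3=1$, $(r_1r_3)^2=1$), and let $X$ be a conjugacy class of involutions of $\tilde W$. Then the commuting involution graph $\mathcal{C}(\tilde W,X)$ is disconnected.
   Context: For a group $G$ and a set $X$ of involutions of $G$, the commuting involution graph $\mathcal{C}(G,X)$ has vertex set $X$, with distinct $x,y\in X$ joined by an edge whenever $xy=yx$. *)

(* Defs.v *)
From mathcomp Require Import all_boot all_order all_algebra.
Set Implicit Arguments. Unset Strict Implicit. Unset Printing Implicit Defensive.
Import GRing.Theory Num.Theory.
Local Open Scope ring_scope.

(* The affine Coxeter group of type ~G2, realized (faithfully, via its
   standard geometric representation as the affine Weyl group of G2) as a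
   group of affine transformations of the coroot lattice Z^2, written as
   3x3 integer matrices [[M, t], [0, 1]] acting on column vectors (a, b, 1).
   Coordinates are w.r.t. the simple coroots a1^v (short root a1) and
   a2^v (long root a2).
   r1 = reflection in the short simple root,
   r2 = reflection in the long simple root,
   r3 = affine reflection x |-> x - (<theta,x> - 1) theta^v.
   One checks (r1 r2)^6 = (r2 r3)^3 = (r1 r3)^2 = 1. *)

Definition mx3 (l : seq (seq int)) : 'M[int]_3 :=
  \matrix_(i < 3, j < 3) nth 0 (nth [::] l i) j.

Definition r1 : 'M[int]_3 := mx3 [:: [:: -1; 1; 0]; [:: 0; 1; 0]; [:: 0; 0; 1]].
Definition r2 : 'M[int]_3 := mx3 [:: [:: 1; 0; 0]; [:: 3; -1; 0]; [:: 0; 0; 1]].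
Definition r3 : 'M[int]_3 := mx3 [:: [:: 1; -1; 1]; [:: 0; -1; 2]; [:: 0; 0; 1]].

Inductive inWG2 : 'M[int]_3 -> Prop :=
  | inWG2_1 : inWG2 1%:M
  | inWG2_r1 : inWG2 r1
  | inWG2_r2 : inWG2 r2
  | inWG2_r3 : inWG2 r3
  | inWG2_mul g h : inWG2 g -> inWG2 h -> inWG2 (g *m h)
  | inWG2_inv g : inWG2 g -> inWG2 (invmx g).

Definition is_involution (x : 'M[int]_3) : Prop :=
  inWG2 x /\ x *m x = 1%:M /\ x <> 1%:M.

Definition conj_class (x : 'M[int]_3) : 'M[int]_3 -> Prop :=
  fun y => exists2 g, inWG2 g & y = invmx g *m x *m g.

Definition cig_adj (x y : 'M[int]_3) : Prop := x <> y /\ x *m y = y *m x.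

Inductive cig_walk (X : 'M[int]_3 -> Prop) : 'M[int]_3 -> 'M[int]_3 -> Prop :=
  | cig_walk0 x : X x -> cig_walk X x x
  | cig_walkS x y z : X x -> cig_adj x y -> cig_walk X y z -> cig_walk X x z.

Definition cig_connected (X : 'M[int]_3 -> Prop) : Prop :=
  (exists x, X x) /\ forall y z, X y -> X z -> cig_walk X y z.

(* Main.v *)
Require Import Defs.
From mathcomp Require Import all_boot all_order all_algebra.
From mathcomp Require Import zify ring lra.
Set Warnings "-notation-overridden,-ambiguous-paths".
Import GRing.Theory Num.Theory.
Local Open Scope ring_scope.

Definition i0 : 'I_3 := ord0.
Definition i1 : 'I_3 := lift ord0 ord0.
Definition i2 : 'I_3 := lift ord0 (lift ord0 ord0).

Lemma mulmx3E (A B : 'M[int]_3) i j :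
  (A *m B) i j = A i i0 * B i0 j + A i i1 * B i1 j + A i i2 * B i2 j.
Proof. by rewrite mxE !big_ord_recl big_ord0 addr0 addrA. Qed.

Lemma tr3 (A : 'M[int]_3) : \tr A = A i0 i0 + A i1 i1 + A i2 i2.
Proof. by rewrite /mxtrace !big_ord_recl big_ord0 addr0 addrA. Qed.

Lemma ord3 (i : 'I_3) : i = i0 \/ i = i1 \/ i = i2.
Proof.
case: i => [[|[|[|//]]]] Hi; [left|right;left|right;right]; exact: val_inj.
Qed.

Lemma mx3P (A B : 'M[int]_3) :
  (forall i j, i \in [:: i0; i1; i2] -> j \in [:: i0; i1; i2] -> A i j = B i j) -> A = B.
Proof.
move=> H; apply/matrixP => i j; apply: H.
  by case: (ord3 i) => [->|[->|->]].
by case: (ord3 j) => [->|[->|->]].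
Qed.
Lemma one3 (i j : 'I_3) : (1%:M : 'M[int]_3) i j = if i == j then 1 else 0.
Proof. by rewrite mxE; case: eqP. Qed.

Definition Inv (g : 'M[int]_3) : Prop :=
  [/\ g \in unitmx, g i2 i0 = 0, g i2 i1 = 0, g i2 i2 = 1 &
     (exists k : int, g i1 i0 = 3*k) /\ (exists k : int, g i1 i1 = 3*k+1 \/ g i1 i1 = 3*k-1)].

Lemma Inv_mul g h : Inv g -> Inv h -> Inv (g *m h).
Proof.
move=> [Ug G20 G21 G22 [[k Gk] [a Ga]]] [Uh H20 H21 H22 [[k' Hk] [b Hb]]].
split.
- by rewrite unitmx_mul Ug Uh.
- by rewrite mulmx3E G20 G21 G22 H20; ring.
- by rewrite mulmx3E G20 G21 G22 H21; ring.
- by rewrite mulmx3E G20 G21 G22 H22; ring.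
split.
  exists (k * h i0 i0 + g i1 i1 * k'); rewrite mulmx3E Gk Hk H20; ring.
case: Ga => Ga; case: Hb => Hb.
- exists (k * h i0 i1 + 3*a*b + a + b); left; rewrite mulmx3E Gk Ga Hb H21; ring.
- exists (k * h i0 i1 + 3*a*b - a + b); right; rewrite mulmx3E Gk Ga Hb H21; ring.
- exists (k * h i0 i1 + 3*a*b + a - b); right; rewrite mulmx3E Gk Ga Hb H21; ring.
- exists (k * h i0 i1 + 3*a*b - a - b); left; rewrite mulmx3E Gk Ga Hb H21; ring.
Qed.

Lemma Inv_inv g : Inv g -> Inv (invmx g).
Proof.
move=> [Ug G20 G21 G22 [[k Gk] [a Ga]]].
have E1 := mulmxV Ug; have E2 := mulVmx Ug.
have Uh : invmx g \in unitmx by rewrite unitmx_inv.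
have [h Eh] : exists h : 'M[int]_3, h = invmx g by eexists.
rewrite -Eh in E1 E2 Uh *.
have e := fun i j => congr1 (fun M : 'M[int]_3 => M i j) E1.
have e' := fun i j => congr1 (fun M : 'M[int]_3 => M i j) E2.
simpl in e, e'.
have H20 : h i2 i0 = 0.
  by move: (e i2 i0); rewrite mulmx3E one3 /= G20 G21 G22; nia.
have H21 : h i2 i1 = 0.
  by move: (e i2 i1); rewrite mulmx3E one3 /= G20 G21 G22; nia.
have H22 : h i2 i2 = 1.
  by move: (e i2 i2); rewrite mulmx3E one3 /= G20 G21 G22; nia.
have E10 := e i1 i0; rewrite mulmx3E one3 /= Gk H20 ?mulr0 ?addr0 in E10.
have E11 := e' i1 i1; rewrite mulmx3E one3 /= G21 ?mulr0 ?addr0 in E11.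
split => //.
case: Ga => Ga; rewrite Ga in E10.
- have Hk : h i1 i0 = 3 * (- (k * h i0 i0 + a * h i1 i0)) by lia.
  split; first by exists (- (k * h i0 i0 + a * h i1 i0)).
  rewrite Hk Ga in E11.
  exists (- (- (k * h i0 i0 + a * h i1 i0) * g i0 i1 + a * h i1 i1)); left; lia.
- have Hk : h i1 i0 = 3 * (k * h i0 i0 + a * h i1 i0) by lia.
  split; first by exists (k * h i0 i0 + a * h i1 i0).
  rewrite Hk Ga in E11.
  exists ((k * h i0 i0 + a * h i1 i0) * g i0 i1 + a * h i1 i1); right; lia.
Qed.
Lemma sq1 (x : int) : x * x = 1 -> x = 1 \/ x = -1.
Proof.
move=> H.
have : (x - 1) * (x + 1) = 0.
  have -> : (x - 1) * (x + 1) = x*x - 1 by ring.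
  by rewrite H subrr.
move/eqP; rewrite mulf_eq0 => /orP[/eqP|/eqP] E; [left|right]; lia.
Qed.

Lemma mod3_contra (c q r b d s k k' mm nn : int) :
  c*q + r*b + 2*d*s = 0 -> c = 3*k -> (d = 3*mm+1 \/ d = 3*mm-1) -> r = 3*k' ->
  (s = 3*nn+1 \/ s = 3*nn-1) -> False.
Proof.
move=> E Hc Hd Hr Hs; subst c r; case: Hd => Hd; case: Hs => Hs; subst d s; lia.
Qed.

Lemma core_int (a b c d t1 t2 e f g h u1 u2 p q r s k mm k' nn : int) :
  a*a + b*c = 1 -> a*b + b*d = 0 -> c*a + d*c = 0 -> c*b + d*d = 1 ->
  a*t1 + b*t2 + t1 = 0 -> c*t1 + d*t2 + t2 = 0 ->
  e*e + f*g = 1 -> e*f + f*h = 0 -> g*e + h*g = 0 -> g*f + h*h = 1 ->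
  e*u1 + f*u2 + u1 = 0 -> g*u1 + h*u2 + u2 = 0 ->
  e + h = a + d ->
  a*e + b*g = e*a + f*c -> a*f + b*h = e*b + f*d ->
  c*e + d*g = g*a + h*c -> c*f + d*h = g*b + h*d ->
  a*u1 + b*u2 + t1 = e*t1 + f*t2 + u1 -> c*u1 + d*u2 + t2 = g*t1 + h*t2 + u2 ->
  r*f + s*h = c*q + d*s ->
  c = 3*k -> (d = 3*mm+1 \/ d = 3*mm-1) -> r = 3*k' -> (s = 3*nn+1 \/ s = 3*nn-1) ->
  ~ (a = 1 /\ b = 0 /\ c = 0 /\ d = 1 /\ t1 = 0 /\ t2 = 0) ->
  (a = e /\ b = f /\ c = g /\ d = h /\ t1 = u1 /\ t2 = u2).
Proof.
move=> H1 H2 H3 H4 H5 H6 K1 K2 K3 K4 K5 K6 Tr C1 C2 C3 C4 D1 D2 PB Hc Hd Hr Hs Hne.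
have [ad0|ad0] := eqVneq (a + d) 0.
- have hd : d = - a by (timeout 10 lia).
  have he : h = - e by (timeout 10 lia).
  subst d h.
  have bg : b*g = f*c by (timeout 10 lia).
  have af : a*f = b*e by (timeout 10 nia).
  have ce : c*e = a*g by (timeout 10 nia).
  set S := a*e + f*c.
  have eS : e = a * S.
    have -> : e = (a*a+b*c)*e by rewrite H1 mul1r.
    have -> : (a*a+b*c)*e = a*(a*e + f*c) + c*(b*e - a*f) by ring.
    by rewrite af subrr mulr0 addr0.
  have fS : f = b * S.
    have -> : f = (a*a+b*c)*f by rewrite H1 mul1r.
    have -> : (a*a+b*c)*f = b*(a*e + f*c) + a*(a*f - b*e) by ring.
    by rewrite af subrr mulr0 addr0.
  have gS : g = c * S.
    have -> : g = (a*a+b*c)*g by rewrite H1 mul1r.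
    have -> : (a*a+b*c)*g = c*(a*e + f*c) + a*(a*g - c*e) + c*(b*g - f*c) by ring.
    by rewrite ce bg !subrr !mulr0 !addr0.
  have S2 : S * S = 1.
    have : S*S*(a*a+b*c) = e*e+f*g.
      rewrite [in RHS]eS [in RHS]fS [in RHS]gS; ring.
    by rewrite H1 K1 mulr1.
  have [S1|S1] : S = 1 \/ S = -1.
    have : (S - 1) * (S + 1) = 0.
      have -> : (S - 1) * (S + 1) = S*S - 1 by ring.
      by rewrite S2 subrr.
    move/eqP; rewrite mulf_eq0 => /orP[/eqP|/eqP] E; [left|right]; lia.
  + rewrite S1 !mulr1 in eS fS gS; subst e f g.
    by lia.
  + rewrite S1 !mulrN1 in eS fS gS; subst e f g.
    exfalso; apply: (@mod3_contra (3*k) q (3*k') b (-a) s k k' mm nn) => //; lia.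
- have b0 : b = 0.
    have : b * (a + d) = 0 by (timeout 10 lia).
    by move/eqP; rewrite mulf_eq0 (negPf ad0) orbF => /eqP.
  have c0 : c = 0.
    have : c * (a + d) = 0 by (timeout 10 lia).
    by move/eqP; rewrite mulf_eq0 (negPf ad0) orbF => /eqP.
  rewrite b0 c0 in H1 H2 H3 H4 H5 H6 C1 C2 C3 C4 D1 D2.
  have ad : a = d.
    have : (a - d) * (a + d) = 0.
      have -> : (a - d) * (a + d) = (a*a + 0*0) - (0*0 + d*d) by ring.
      by rewrite H1 H4 subrr.
    by move/eqP; rewrite mulf_eq0 (negPf ad0) orbF subr_eq0 => /eqP.
  subst d.
  have [a1|a1] : a = 1 \/ a = -1 by apply: sq1; rewrite -H1; ring.
  + subst a; exfalso; apply: Hne; lia.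
  + subst a.
    have Tr' : e + h = -2 by rewrite Tr.
    have f0 : f = 0.
      have : f * (e + h) = 0 by rewrite -K2; ring.
      rewrite Tr'; lia.
    have g0 : g = 0.
      have : g * (e + h) = 0 by rewrite -K3; ring.
      rewrite Tr'; lia.
    subst f g.
    have [e1|e1] : e = 1 \/ e = -1 by apply: sq1; rewrite -K1; ring.
    have [h1|h1] : h = 1 \/ h = -1 by apply: sq1; rewrite -K4; ring.
    all: subst; lia.
Qed.

Lemma gen3 (y : 'M[int]_3) : exists z : 'M[int]_3, z = y.
Proof. by eexists. Qed.

Lemma core (x g h : 'M[int]_3) : Inv x -> Inv g -> Inv h ->
  x *m x = 1%:M -> x <> 1%:M -> g *m h = 1%:M -> h *m g = 1%:M ->
  x *m (h *m x *m g) = (h *m x *m g) *m x -> x = h *m x *m g.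
Proof.
move=> Ix Ig Ih Hxx Hx1 gh hg Hc.
have Iy : Inv (h *m x *m g) by apply: Inv_mul => //; apply: Inv_mul.
have yy : (h *m x *m g) *m (h *m x *m g) = 1%:M.
  by rewrite -!mulmxA (mulmxA g h) gh mul1mx (mulmxA x x) Hxx mul1mx hg.
have gy : g *m (h *m x *m g) = x *m g by rewrite !mulmxA gh mul1mx.
have ty : \tr (h *m x *m g) = \tr x by rewrite mxtrace_mulC mulmxA gh mul1mx.
have [y Ey] := gen3 (h *m x *m g); rewrite -Ey in Iy yy gy ty Hc *.
case: Ix => _ X20 X21 X22 [[k Xk] [mm Xm]].
case: Ig => _ _ G21 _ [[k' Gk] [nn Gm]].
case: Iy => _ Y20 Y21 Y22 _.
have E1 := fun i j => congr1 (fun M : 'M[int]_3 => M i j) Hxx.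
have E2 := fun i j => congr1 (fun M : 'M[int]_3 => M i j) yy.
have E3 := fun i j => congr1 (fun M : 'M[int]_3 => M i j) Hc.
have E4 := congr1 (fun M : 'M[int]_3 => M i1 i1) gy.
simpl in E1, E2, E3, E4.
rewrite !tr3 X22 Y22 in ty.
have A00 := E1 i0 i0; have A01 := E1 i0 i1; have A10 := E1 i1 i0; have A11 := E1 i1 i1;
have A02 := E1 i0 i2; have A12 := E1 i1 i2.
have B00 := E2 i0 i0; have B01 := E2 i0 i1; have B10 := E2 i1 i0; have B11 := E2 i1 i1;
have B02 := E2 i0 i2; have B12 := E2 i1 i2.
have C00 := E3 i0 i0; have C01 := E3 i0 i1; have C10 := E3 i1 i0; have C11 := E3 i1 i1;
have C02 := E3 i0 i2; have C12 := E3 i1 i2.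
rewrite !mulmx3E !one3 /= ?X20 ?X21 ?X22 ?Y20 ?Y21 ?Y22 in A00 A01 A10 A11 A02 A12
  B00 B01 B10 B11 B02 B12 C00 C01 C10 C11 C02 C12 E4.
rewrite G21 in E4.
clear E1 E2 E3.
have Hne : ~ (x i0 i0 = 1 /\ x i0 i1 = 0 /\ x i1 i0 = 0 /\ x i1 i1 = 1 /\ x i0 i2 = 0 /\ x i1 i2 = 0).
  move=> [h00 [h01 [h10 [h11 [h02 h12]]]]]; apply: Hx1; apply: mx3P => i j.
  rewrite !inE => /or3P[]/eqP-> /or3P[]/eqP->; rewrite one3 /=; by [].
have := @core_int (x i0 i0) (x i0 i1) (x i1 i0) (x i1 i1) (x i0 i2) (x i1 i2)
  (y i0 i0) (y i0 i1) (y i1 i0) (y i1 i1) (y i0 i2) (y i1 i2)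
  (g i0 i0) (g i0 i1) (g i1 i0) (g i1 i1) k mm k' nn.
move=> HH.
have [e00 [e01 [e10 [e11 [e02 e12]]]]] : x i0 i0 = y i0 i0 /\ x i0 i1 = y i0 i1 /\ x i1 i0 = y i1 i0 /\ x i1 i1 = y i1 i1 /\ x i0 i2 = y i0 i2 /\ x i1 i2 = y i1 i2.
  apply: HH => //; lia.
apply: mx3P => i j.
rewrite !inE => /or3P[]/eqP-> /or3P[]/eqP-> //; congruence.
Qed.

Ltac ents := rewrite !inE => /or3P[]/eqP-> /or3P[]/eqP->.

Lemma r1sq : r1 *m r1 = 1%:M.
Proof. apply: mx3P => i j; ents; rewrite mulmx3E one3 /r1 /mx3 !mxE /=; lia. Qed.
Lemma r2sq : r2 *m r2 = 1%:M.
Proof. apply: mx3P => i j; ents; rewrite mulmx3E one3 /r2 /mx3 !mxE /=; lia. Qed.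
Lemma r3sq : r3 *m r3 = 1%:M.
Proof. apply: mx3P => i j; ents; rewrite mulmx3E one3 /r3 /mx3 !mxE /=; lia. Qed.

Lemma Inv1 : Inv 1%:M.
Proof.
split; rewrite ?one3 //; first exact: unitmx1.
by split; [exists 0 | exists 0; left].
Qed.

Lemma Inv_r1 : Inv r1.
Proof.
have [U _] := mulmx1_unit r1sq.
split => //; rewrite /r1 /mx3 ?mxE //=.
by split; [exists 0 | exists 0; left].
Qed.
Lemma Inv_r2 : Inv r2.
Proof.
have [U _] := mulmx1_unit r2sq.
split => //; rewrite /r2 /mx3 ?mxE //=.
by split; [exists 1 | exists 0; right].
Qed.
Lemma Inv_r3 : Inv r3.
Proof.
have [U _] := mulmx1_unit r3sq.
split => //; rewrite /r3 /mx3 ?mxE //=.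
by split; [exists 0 | exists 0; right].
Qed.

Lemma inW_Inv g : inWG2 g -> Inv g.
Proof.
elim => [||||g1 h1 _ I1 _ I2|g1 _ I1].
- exact: Inv1.
- exact: Inv_r1.
- exact: Inv_r2.
- exact: Inv_r3.
- exact: Inv_mul.
- exact: Inv_inv.
Qed.

Lemma invmx_sq (r : 'M[int]_3) : r *m r = 1%:M -> invmx r = r.
Proof.
move=> E; have [U _] := mulmx1_unit E.
by rewrite -[LHS]mulmx1 -E mulmxA mulVmx // mul1mx.
Qed.

Lemma comm_of (r x : 'M[int]_3) : r *m r = 1%:M -> invmx r *m x *m r = x -> x *m r = r *m x.
Proof.
move=> E H; rewrite (@invmx_sq r E) in H.
rewrite -[in LHS]H -!mulmxA.
by rewrite (E : r *m r = 1%:M) mulmx1.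
Qed.

Lemma nontriv (x : 'M[int]_3) : Inv x -> x <> 1%:M ->
  exists2 r, inWG2 r & invmx r *m x *m r <> x.
Proof.
move=> [_ X20 X21 X22 _] Hx1.
case: (eqVneq (invmx r1 *m x *m r1) x) => [E1|]; last by move/eqP => H; exists r1 => //; exact: inWG2_r1.
case: (eqVneq (invmx r2 *m x *m r2) x) => [E2|]; last by move/eqP => H; exists r2 => //; exact: inWG2_r2.
case: (eqVneq (invmx r3 *m x *m r3) x) => [E3|]; last by move/eqP => H; exists r3 => //; exact: inWG2_r3.
exfalso.
have C1 := @comm_of r1 x r1sq E1; have C2 := @comm_of r2 x r2sq E2; have C3 := @comm_of r3 x r3sq E3.
have F1 := fun i j => congr1 (fun M : 'M[int]_3 => M i j) C1.
have F2 := fun i j => congr1 (fun M : 'M[int]_3 => M i j) C2.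
have F3 := fun i j => congr1 (fun M : 'M[int]_3 => M i j) C3.
simpl in F1, F2, F3.
have a00 := F1 i0 i0; have a01 := F1 i0 i1; have a10 := F1 i1 i0; have a11 := F1 i1 i1;
have a02 := F1 i0 i2; have a12 := F1 i1 i2.
have b00 := F2 i0 i0; have b01 := F2 i0 i1; have b10 := F2 i1 i0; have b11 := F2 i1 i1;
have b02 := F2 i0 i2; have b12 := F2 i1 i2.
have c02 := F3 i0 i2; have c12 := F3 i1 i2.
rewrite !mulmx3E /r1 /r2 /r3 /mx3 !mxE /= X20 X21 X22 in a00 a01 a10 a11 a02 a12
  b00 b01 b10 b11 b02 b12 c02 c12.
clear F1 F2 F3.
apply: Hx1; apply: mx3P => i j; ents; rewrite one3 /= ?X20 ?X21 ?X22 //; lia.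
Qed.

Lemma walk_eq (X : 'M[int]_3 -> Prop) y z :
  (forall u v, X u -> X v -> cig_adj u v -> False) -> cig_walk X y z -> y = z.
Proof.
move=> H; case => // a b c Xa ab w.
exfalso; apply: (H a b Xa _ ab).
by case: w.
Qed.

Lemma noedge (x : 'M[int]_3) : is_involution x ->
  forall u v, conj_class x u -> conj_class x v -> cig_adj u v -> False.
Proof.
move=> [Wx [xx x1]] u v [h1 W1 ->] [h2 W2 ->] [Hne Hc].
have [U1 _ _ _ _] := inW_Inv _ W1.
have [U2 _ _ _ _] := inW_Inv _ W2.
have Wu : inWG2 (invmx h1 *m x *m h1).
  by apply: inWG2_mul => //; apply: inWG2_mul => //; apply: inWG2_inv.
have WG : inWG2 (invmx h1 *m h2) by apply: inWG2_mul => //; apply: inWG2_inv.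
have WH : inWG2 (invmx h2 *m h1) by apply: inWG2_mul => //; apply: inWG2_inv.
have Ev : (invmx h2 *m h1) *m (invmx h1 *m x *m h1) *m (invmx h1 *m h2) =
          invmx h2 *m x *m h2.
  by rewrite !mulmxA !(mulmxK U1).
have gh : (invmx h1 *m h2) *m (invmx h2 *m h1) = 1%:M.
  by rewrite !mulmxA (mulmxK U2) (mulVmx U1).
have hg : (invmx h2 *m h1) *m (invmx h1 *m h2) = 1%:M.
  by rewrite !mulmxA (mulmxK U1) (mulVmx U2).
have uu : (invmx h1 *m x *m h1) *m (invmx h1 *m x *m h1) = 1%:M.
  by rewrite !mulmxA (mulmxK U1) -(mulmxA (invmx h1) x x) xx mulmx1 (mulVmx U1).
have u1 : invmx h1 *m x *m h1 <> 1%:M.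
  move=> Eu; apply: x1.
  have : h1 *m (invmx h1 *m x *m h1) *m invmx h1 = x.
    by rewrite !mulmxA (mulmxV U1) mul1mx (mulmxK U1).
  by rewrite Eu mulmx1 (mulmxV U1) => <-.
apply: Hne; rewrite -Ev.
apply: core => //; try exact: inW_Inv.
by rewrite Ev.
Qed.

Theorem proposition3p2 (x : 'M[int]_3) :
  is_involution x -> ~ cig_connected (conj_class x).
Proof.
move=> Hx [_ Hc].
have [Wx [xx x1]] := Hx.
have [r Wr Hr] := @nontriv x (inW_Inv _ Wx) x1.
have X1 : conj_class x x.
  by exists 1%:M; [exact: inWG2_1 | rewrite invmx1 mul1mx mulmx1].
have X2 : conj_class x (invmx r *m x *m r) by exists r.
apply: Hr; symmetry; apply: (@walk_eq _ _ _ (@noedge x Hx)).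
exact: Hc.
Qed.
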